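(* Let $R$ be a positive integer, let $A \in \mathbb{R}^{R \times d_{\text{in}}}$ and $B \in \mathbb{R}^{d_{\text{out}} \times R}$, let $\vec{a}_i \in \mathbb{R}^{1\times d_{\text{in}}}$ denote the $i$-th row of $A$ and $\vec{b}_i \in \mathbb{R}^{d_{\text{out}}\times 1}$ the $i$-th column of $B$. For $r \in \{1,\dots,R\}$ define $f(\vec{x}; r) = \left(\sum_{i=1}^{r} \vec{b}_i \vec{a}_i\right)\vec{x}$ for $\vec{x}\in\mathbb{R}^{d_{\text{in}}}$. Let $(\vec{x},y)$ be a random pair with $\mathbb{E}[\|\vec{x}\|]<\infty$, and let $\mathcal{L}(\cdot, y)$ be a loss function that is $L_{\mathcal{L}}$-Lipschitz continuous in its first argument (with respect to the Euclidean norm on $\mathbb{R}^{d_{\text{out}}}$), uniformly in $y$. Let $E(r) = \mathbb{E}_{(\vec{x},y)}[\mathcal{L}(f(\vec{x}; r), y)]$ be the expected error at rank $r$. Then for any ranks $r_1 < r_{\text{int}} < R$, $$ |E(r_{\text{int}}) - E(r_1)| \le C \sum_{i=r_1+1}^{r_{\text{int}}} \|\vec{b}_i\|\,\|\vec{a}_i\|, $$ where $C = L_{\mathcal{L}} \cdot \mathbb{E}[\|\vec{x}\|]$.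
   Context: $\|\cdot\|$ denotes the Euclidean norm of a vector (row or column). The map $f(\cdot; r)$ is the output of a ''nested subspace'' linear layer truncated to rank $r$, i.e. using the weight matrix $W_r = B_r A_r$ where $A_r$ consists of the first $r$ rows of $A$ and $B_r$ of the first $r$ columns of $B$. *)

(* Defs.v *)
From HB Require Import structures.
From mathcomp Require Import all_boot all_order all_algebra.
From mathcomp Require Import all_classical all_reals all_analysis.
Set Implicit Arguments. Unset Strict Implicit. Unset Printing Implicit Defensive.
Import Order.TTheory GRing.Theory Num.Theory.
Local Open Scope ring_scope.

(* Euclidean norm of a (row or column) vector, written generally for a matrix
   (Frobenius norm; for a 1 x n or n x 1 matrix this is the Euclidean norm). *)
Definition enorm (R : realType) (m n : nat) (M : 'M[R]_(m, n)) : R :=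
  Num.sqrt (\sum_(i < m) \sum_(j < n) M i j ^+ 2).

(* Truncated-rank weight matrix W_r = sum_{i=1}^r b_i a_i (0-indexed: i < r). *)
Definition Wtrunc (R : realType) (Rk din dout : nat)
  (A : 'M[R]_(Rk, din)) (B : 'M[R]_(dout, Rk)) (r : nat) : 'M[R]_(dout, din) :=
  \sum_(i < Rk | (i < r)%N) (col i B *m row i A).

Definition ftrunc (R : realType) (Rk din dout : nat)
  (A : 'M[R]_(Rk, din)) (B : 'M[R]_(dout, Rk)) (r : nat) (x : 'cV[R]_din)
  : 'cV[R]_dout := Wtrunc A B r *m x.

(* Main.v *)
Require Import Defs.
From HB Require Import structures.
From mathcomp Require Import all_boot all_order all_algebra.
From mathcomp Require Import all_classical all_reals all_analysis.
From mathcomp Require Import ring lra.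
Set Implicit Arguments.
Import Order.TTheory GRing.Theory Num.Theory.
Local Open Scope ring_scope.


Lemma CS {R : realType} (I : finType) (u v : I -> R) :
  (\sum_i u i * v i) ^+ 2 <= (\sum_i u i ^+ 2) * (\sum_i v i ^+ 2).
Proof.
have H : 0 <= \sum_i \sum_j (u i * v j - u j * v i) ^+ 2.
  by apply: sumr_ge0 => i _; apply: sumr_ge0 => j _; exact: sqr_ge0.
have E1 : (\sum_i u i ^+ 2) * (\sum_i v i ^+ 2) = \sum_i \sum_j (u i * v j) ^+ 2.
  rewrite mulr_suml; apply: eq_bigr => i _; rewrite mulr_sumr.
  by apply: eq_bigr => j _; rewrite exprMn.
have E2 : (\sum_i u i ^+ 2) * (\sum_i v i ^+ 2) = \sum_i \sum_j (u j * v i) ^+ 2.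
  rewrite E1 exchange_big /=; done.
have E3 : (\sum_i u i * v i) ^+ 2 = \sum_i \sum_j (u i * v j) * (u j * v i).
  rewrite expr2 mulr_suml; apply: eq_bigr => i _; rewrite mulr_sumr.
  by apply: eq_bigr => j _; ring.
have E : \sum_i \sum_j (u i * v j - u j * v i) ^+ 2 =
   (\sum_i u i ^+ 2) * (\sum_i v i ^+ 2) + (\sum_i u i ^+ 2) * (\sum_i v i ^+ 2)
   - 2 * (\sum_i u i * v i) ^+ 2.
  rewrite {1}E1 E2 E3 -big_split /= mulr_sumr -sumrB; apply: eq_bigr => i _.
  rewrite -big_split /= mulr_sumr -sumrB; apply: eq_bigr => j _; ring.
rewrite E in H; lra.
Qed.

Lemma CS2 {R : realType} (m n : nat) (M N : 'M[R]_(m, n)) :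
  (\sum_i \sum_j M i j * N i j) ^+ 2 <=
  (\sum_i \sum_j M i j ^+ 2) * (\sum_i \sum_j N i j ^+ 2).
Proof.
rewrite !pair_bigA /=.
have h := (@CS _ _ (fun p => M p.1 p.2) (fun p => N p.1 p.2)). exact: h.
Qed.

Lemma enorm_ge0 {R : realType} (m n : nat) (M : 'M[R]_(m, n)) : 0 <= enorm M.
Proof. exact: sqrtr_ge0. Qed.

Lemma enorm_sqr {R : realType} (m n : nat) (M : 'M[R]_(m, n)) :
  enorm M ^+ 2 = \sum_i \sum_j M i j ^+ 2.
Proof.
rewrite sqr_sqrtr //; apply: sumr_ge0 => i _; apply: sumr_ge0 => j _.
exact: sqr_ge0.
Qed.

Lemma enorm0 {R : realType} (m n : nat) : enorm (0 : 'M[R]_(m, n)) = 0.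
Proof.
rewrite /enorm big1 ?sqrtr0 // => i _; rewrite big1 // => j _.
by rewrite mxE expr0n.
Qed.

Lemma enormD {R : realType} (m n : nat) (M N : 'M[R]_(m, n)) :
  enorm (M + N) <= enorm M + enorm N.
Proof.
have a0 := enorm_ge0 M; have b0 := enorm_ge0 N.
have c0 := enorm_ge0 (M + N).
set dt := \sum_i \sum_j M i j * N i j.
have cs : dt ^+ 2 <= (enorm M * enorm N) ^+ 2.
  by rewrite exprMn !enorm_sqr; exact: CS2.
have dle : dt <= enorm M * enorm N.
  have p0 : 0 <= enorm M * enorm N by exact: mulr_ge0.
  nra.
have sq : enorm (M + N) ^+ 2 = enorm M ^+ 2 + enorm N ^+ 2 + 2 * dt.
  rewrite !enorm_sqr /dt mulr_sumr -!big_split; apply: eq_bigr => i _.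
  rewrite mulr_sumr -!big_split; apply: eq_bigr => j _; rewrite mxE /=; ring.
nra.
Qed.

Lemma enorm_sum {R : realType} (I : Type) (r : seq I) (P : pred I) (m n : nat)
  (F : I -> 'M[R]_(m, n)) :
  enorm (\sum_(i <- r | P i) F i) <= \sum_(i <- r | P i) enorm (F i).
Proof.
apply: (big_ind2 (fun M x => enorm M <= x)).
- by rewrite enorm0.
- move=> M1 x1 M2 x2 h1 h2; apply: le_trans (enormD M1 M2) _; exact: lerD.
- by [].
Qed.

Lemma enormM {R : realType} (m n p : nat) (M : 'M[R]_(m, n)) (N : 'M[R]_(n, p)) :
  enorm (M *m N) <= enorm M * enorm N.
Proof.
rewrite /enorm -sqrtrM; last first.
  by apply: sumr_ge0 => i _; apply: sumr_ge0 => j _; exact: sqr_ge0.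
rewrite ler_sqrt; last first.
  apply: mulr_ge0; apply: sumr_ge0 => i _; apply: sumr_ge0 => j _; exact: sqr_ge0.
rewrite mulr_suml; apply: ler_sum => i _.
have -> : (\sum_(j < n) M i j ^+ 2) * (\sum_(i0 < n) \sum_(j < p) N i0 j ^+ 2)
   = \sum_(j < p) (\sum_(k < n) M i k ^+ 2) * (\sum_(k < n) N k j ^+ 2).
  by rewrite exchange_big mulr_sumr.
apply: ler_sum => j _; rewrite mxE.
exact: (@CS _ _ (fun k => M i k) (fun k => N k j)).
Qed.


Lemma Wdiff {R : realType} (Rk din dout : nat) (A : 'M[R]_(Rk, din)) (B : 'M[R]_(dout, Rk))
  (r1 rint : nat) : (r1 <= rint)%N ->
  Wtrunc A B rint - Wtrunc A B r1 =
  \sum_(i < Rk | (r1 <= i < rint)%N) col i B *m row i A.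
Proof.
move=> hr; rewrite /Wtrunc (bigID (fun i : 'I_Rk => (i < r1)%N)) /=.
have -> : \sum_(i < Rk | (i < rint)%N && (i < r1)%N) col i B *m row i A =
          \sum_(i < Rk | (i < r1)%N) col i B *m row i A.
  apply: eq_bigl => i /=; case h: (i < r1)%N; rewrite ?andbT ?andbF //.
  exact: (leq_trans h hr).
rewrite addrAC subrr add0r; apply: eq_bigl => i /=.
by rewrite -leqNgt andbC.
Qed.

Lemma ptwise {R : realType} (Rk din dout : nat) (A : 'M[R]_(Rk, din)) (B : 'M[R]_(dout, Rk))
  (r1 rint : nat) (x : 'cV[R]_din) : (r1 <= rint)%N ->
  enorm (ftrunc A B rint x - ftrunc A B r1 x) <=
  (\sum_(i < Rk | (r1 <= i < rint)%N) enorm (col i B) * enorm (row i A)) * enorm x.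
Proof.
move=> hr; rewrite /ftrunc -mulmxBl Wdiff // mulmx_suml.
apply: le_trans (enorm_sum _ _ _) _; rewrite mulr_suml; apply: ler_sum => i _.
apply: le_trans (enormM _ _) _; apply: ler_wpM2r; first exact: enorm_ge0.
exact: enormM.
Qed.

Theorem proposition1 (R : realType) (d : measure_display) (T : measurableType d)
  (P : probability T R) (Y : Type)
  (Rk din dout : nat) (A : 'M[R]_(Rk, din)) (B : 'M[R]_(dout, Rk))
  (x : T -> 'cV[R]_din) (y : T -> Y)
  (Loss : 'cV[R]_dout -> Y -> R) (LL : R) (r1 rint : nat) :
  (0 < Rk)%N ->
  P.-integrable setT (fun t => (enorm (x t))%:E) ->
  0 <= LL ->
  (forall (yy : Y) (u v : 'cV[R]_dout), `|Loss u yy - Loss v yy| <= LL * enorm (u - v)) ->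
  (forall r : nat, (1 <= r <= Rk)%N ->
     P.-integrable setT (fun t => (Loss (ftrunc A B r (x t)) (y t))%:E)) ->
  (1 <= r1)%N -> (r1 < rint)%N -> (rint < Rk)%N ->
  `| Rintegral P setT (fun t => Loss (ftrunc A B rint (x t)) (y t))
     - Rintegral P setT (fun t => Loss (ftrunc A B r1 (x t)) (y t)) |
  <= (LL * Rintegral P setT (fun t => enorm (x t)))
     * \sum_(i < Rk | (r1 <= i < rint)%N) enorm (col i B) * enorm (row i A).
Proof.
move=> _ ix LL0 Lip iL r1ge r1lt rintlt.
have i1 := iL r1 _; have i2 := iL rint _.
have {}i1 : P.-integrable setT (EFin \o (fun t => Loss (ftrunc A B r1 (x t)) (y t))).
  apply: i1; rewrite r1ge /=; apply: ltnW; exact: (ltn_trans r1lt).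
have {}i2 : P.-integrable setT (EFin \o (fun t => Loss (ftrunc A B rint (x t)) (y t))).
  by apply: i2; rewrite (leq_trans r1ge (ltnW r1lt)) /= ltnW.
set F := (fun t => Loss (ftrunc A B rint (x t)) (y t)) in i2 *.
set G := (fun t => Loss (ftrunc A B r1 (x t)) (y t)) in i1 *.
set S := \sum_(i < Rk | (r1 <= i < rint)%N) enorm (col i B) * enorm (row i A).
have iFG : P.-integrable setT (EFin \o (fun t => F t - G t)).
  apply: (eq_integrable measurableT) (integrableB measurableT i2 i1) => t _ //.
rewrite -RintegralB //.
apply: le_trans (le_normr_Rintegral measurableT iFG) _.
have ix' : P.-integrable setT (EFin \o (fun t => enorm (x t))) by [].
have iK : P.-integrable setT (EFin \o (fun t => (LL * S) * enorm (x t))).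
  apply: (eq_integrable measurableT) (integrableZl measurableT (LL * S) ix') => t _ //.
have iN := integrable_norm iFG.
apply: le_trans (le_Rintegral measurableT iN iK _) _.
  move=> t _ /=; apply: le_trans (Lip _ _ _) _.
  rewrite -mulrA; apply: ler_wpM2l => //; apply: ptwise; exact: ltnW.
rewrite RintegralZl //.
rewrite [X in X <= _]mulrAC; exact: lexx.
Qed.
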